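(* $\dim_H F(1/2,1)\le \frac12$.
   Context: Every $x\in(0,1)\setminus\mathbb{Q}$ has a unique infinite continued fraction expansion $x=[a_1(x),a_2(x),\dots]$ with partial quotients $a_i(x)\in\mathbb{N}=\{1,2,\dots\}$. For $n\in\mathbb{N}$ let $T_n(x):=\max\{a_k(x):1\le k\le n\}$. Define $$F(1/2,1):=\Big\{x\in(0,1)\setminus\mathbb{Q}:\ \lim_{n\to\infty}\frac{T_n(x)}{e^{\sqrt{n}}}=1\Big\}.$$ $\dim_H$ denotes Hausdorff dimension. *)

(* Defs.v *)
From Stdlib Require Import Reals Lra ZArith.
Open Scope R_scope.

Definition gauss (x : R) : R := / x - IZR (Int_part (/ x)).

Fixpoint gauss_iter (n : nat) (x : R) : R :=
  match n with
  | O => x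
  | S m => gauss (gauss_iter m x)
  end.

(** Partial quotient a_k(x) = floor(1 / T^{k-1}(x)), for k >= 1
    (for irrational x in (0,1) this is the k-th partial quotient of
    x = [a_1(x), a_2(x), ...]). *)
Definition pq (k : nat) (x : R) : nat :=
  Z.to_nat (Int_part (/ gauss_iter (k - 1) x)).

Fixpoint Tmax (n : nat) (x : R) : nat :=
  match n with
  | O => 0%nat
  | S m => Nat.max (Tmax m x) (pq (S m) x)
  end.

Definition irrational (x : R) : Prop :=
  ~ exists (p q : Z), q <> 0%Z /\ x = IZR p / IZR q.

Definition F_half_one (x : R) : Prop :=
  0 < x < 1 /\ irrational x /\
  Un_cv (fun n => INR (Tmax n x) / exp (sqrt (INR n))) 1.

Definition diam_le (U : R -> Prop) (r : R) : Prop :=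
  forall x y, U x -> U y -> Rabs (x - y) <= r.

Definition Hdelta_null (s delta : R) (E : R -> Prop) : Prop :=
  forall eps, 0 < eps ->
    exists (U : nat -> R -> Prop) (r : nat -> R) (l : R),
      (forall i, 0 < r i /\ r i <= delta /\ diam_le (U i) (r i))
      /\ (forall x, E x -> exists i, U i x)
      /\ infinite_sum (fun i => Rpower (r i) s) l
      /\ l < eps.

Definition Hausdorff_null (s : R) (E : R -> Prop) : Prop :=
  forall delta, 0 < delta -> Hdelta_null s delta E.

Definition is_glb (P : R -> Prop) (m : R) : Prop :=
  (forall y, P y -> m <= y) /\ (forall b, (forall y, P y -> b <= y) -> b <= m).

Definition is_hausdorff_dim (E : R -> Prop) (d : R) : Prop :=
  is_glb (fun s => 0 <= s /\ Hausdorff_null s E) d.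

(* Main.v *)
Require Import Defs.
From Stdlib Require Import Reals Lra Lia ZArith List.
From Stdlib Require Import IndefiniteDescription.
Open Scope R_scope.


Definition good (x : R) : Prop := 0 < x < 1 /\ irrational x.

Lemma gauss_facts x : good x ->
  good (gauss x) /\ 1 <= IZR (Int_part (/ x)) /\
  x = / (IZR (Int_part (/ x)) + gauss x).
Proof.
  intros [[H0 H1] Hirr].
  assert (Hy : 1 < / x).
  { apply (Rmult_lt_reg_l x); [lra|]. rewrite Rinv_r by lra. lra. }
  destruct (base_Int_part (/ x)) as [Hk1 Hk2].
  set (k := Int_part (/ x)) in *.
  assert (Hk : (1 <= k)%Z).
  { assert (0 < IZR k) by lra. apply lt_0_IZR in H. lia. }
  apply IZR_le in Hk. simpl in Hk.
  unfold gauss. fold k.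
  assert (Hx : x = / (IZR k + (/ x - IZR k))).
  { replace (IZR k + (/ x - IZR k)) with (/ x) by ring. rewrite Rinv_inv. reflexivity. }
  split; [|split; [lra|exact Hx]].
  assert (Hne : / x - IZR k <> 0).
  { intro E. apply Hirr. exists 1%Z, k. split.
    - intro Hk0. rewrite Hk0 in Hk. simpl in Hk. lra.
    - rewrite Hx, E. rewrite Rplus_0_r. simpl. field. lra. }
  split; [split; lra|].
  intros [p [q [Hq E]]]. apply Hirr.
  exists q, (k * q + p)%Z. split.
  - intro Z0. assert (IZR (k*q+p) = 0) by (rewrite Z0; reflexivity).
    rewrite plus_IZR, mult_IZR in H.
    assert (IZR q <> 0) by (apply not_0_IZR; exact Hq).
    assert (/ x = IZR k + IZR p / IZR q) by lra.
    assert (IZR k * IZR q + IZR p = / x * IZR q) by (rewrite H3; field; exact H2).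
    assert (/ x * IZR q = 0) by lra.
    apply Rmult_integral in H5. destruct H5; [|contradiction].
    assert (/ x > 0) by (apply Rinv_0_lt_compat; lra). lra.
  - rewrite plus_IZR, mult_IZR.
    assert (IZR q <> 0) by (apply not_0_IZR; exact Hq).
    assert (/ x = IZR k + IZR p / IZR q) by lra.
    assert (IZR k * IZR q + IZR p = / x * IZR q) by (rewrite H2; field; exact H).
    rewrite H3. field. repeat split; try exact H; lra.
Qed.

Lemma gauss_iter_shift m x : gauss_iter m (gauss x) = gauss_iter (S m) x.
Proof. induction m; simpl; [reflexivity|]. simpl in IHm. rewrite IHm. reflexivity. Qed.

Lemma pq_shift k x : pq (S (S k)) x = pq (S k) (gauss x).
Proof. unfold pq. simpl. rewrite Nat.sub_0_r. rewrite gauss_iter_shift. reflexivity. Qed.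

Lemma iter_good m x : good x -> good (gauss_iter m x).
Proof. intro H. induction m; simpl; [exact H|]. apply gauss_facts. exact IHm. Qed.

Lemma pq1_INR x : good x -> INR (pq 1 x) = IZR (Int_part (/ x)).
Proof.
  intro H. destruct (gauss_facts x H) as [_ [H1 _]].
  unfold pq. simpl. rewrite INR_IZR_INZ. rewrite Z2Nat.id; [reflexivity|].
  apply le_IZR. lra.
Qed.

Lemma pq_ge1 k x : good x -> (1 <= k)%nat -> 1 <= INR (pq k x).
Proof.
  intros H Hk. destruct k; [lia|].
  assert (E : pq (S k) x = pq 1 (gauss_iter k x)).
  { unfold pq. simpl. rewrite Nat.sub_0_r. reflexivity. }
  rewrite E. pose proof (iter_good k x H) as G. rewrite pq1_INR by exact G.
  apply gauss_facts. exact G.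
Qed.


Definition dl (n : nat) (x : R) : list nat := map (fun k => pq k x) (seq 1 n).
Definition prodR (l : list nat) : R := fold_right (fun a r => INR a * r) 1 l.
Definition cyl (l : list nat) (x : R) : Prop := good x /\ dl (length l) x = l.

Lemma dl_length n x : length (dl n x) = n.
Proof. unfold dl. rewrite length_map, length_seq. reflexivity. Qed.

Lemma dl_S n x : dl (S n) x = pq 1 x :: dl n (gauss x).
Proof.
  unfold dl. simpl. f_equal. rewrite <- seq_shift, map_map.
  apply map_ext_in. intros k Hk. apply in_seq in Hk. destruct k; [lia|].
  apply pq_shift.
Qed.

Lemma alg_diam A gx gy P : 1 <= A -> 0 < gx < 1 -> 0 < gy < 1 -> 0 < P ->
  Rabs (gx - gy) <= / P ^ 2 ->
  Rabs (/ (A + gx) - / (A + gy)) <= / (A * P) ^ 2.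
Proof.
  intros HA Hx Hy HP Hd.
  replace (/ (A + gx) - / (A + gy)) with ((gy - gx) / ((A + gx) * (A + gy))) by (field; lra).
  unfold Rdiv. rewrite Rabs_mult. rewrite Rabs_inv.
  rewrite (Rabs_pos_eq ((A+gx)*(A+gy))) by nra.
  rewrite Rabs_minus_sym.
  assert (H1 : / ((A + gx) * (A + gy)) <= / (A * A)).
  { apply Rinv_le_contravar; nra. }
  replace (/ (A * P) ^ 2) with (/ P ^ 2 * / (A * A)) by (field; lra).
  apply Rmult_le_compat; auto using Rabs_pos.
  left. apply Rinv_0_lt_compat. nra.
Qed.

Lemma prodR_ge1 l : (forall a, In a l -> (1 <= a)%nat) -> 1 <= prodR l.
Proof.
  induction l as [|a l IH]; simpl; intros H; [lra|].
  assert (1 <= INR a) by (apply (le_INR 1); apply H; auto).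
  assert (1 <= prodR l) by (apply IH; auto). nra.
Qed.

Lemma dl_ge1 n x : good x -> forall a, In a (dl n x) -> (1 <= a)%nat.
Proof.
  intros G a Ha. unfold dl in Ha. apply in_map_iff in Ha. destruct Ha as [k [<- Hk]].
  apply in_seq in Hk. apply INR_le. simpl. apply pq_ge1; auto; lia.
Qed.

Lemma cyl_diam l : forall x y, cyl l x -> cyl l y -> Rabs (x - y) <= / (prodR l) ^ 2.
Proof.
  induction l as [|a l IH]; intros x y [Gx Ex] [Gy Ey].
  - simpl. destruct Gx as [[? ?] _]. destruct Gy as [[? ?] _].
    replace (/ 1 ^ 2) with 1 by field. unfold Rabs. destruct Rcase_abs; lra.
  - simpl length in Ex, Ey. rewrite dl_S in Ex, Ey. injection Ex as Ea Ex. injection Ey as Ea' Ey.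
    destruct (gauss_facts x Gx) as [Gx' [Hax Hx]].
    destruct (gauss_facts y Gy) as [Gy' [Hay Hy]].
    rewrite <- pq1_INR in Hax, Hx by assumption.
    rewrite <- pq1_INR in Hay, Hy by assumption.
    rewrite Ea in Hax, Hx. rewrite Ea' in Hay, Hy.
    rewrite Hx, Hy. simpl prodR.
    assert (Hl : forall b, In b l -> (1 <= b)%nat).
    { rewrite <- Ex. apply dl_ge1. exact Gx'. }
    pose proof (prodR_ge1 l Hl).
    apply alg_diam; try lra.
    + destruct Gx' as [? _]; lra.
    + destruct Gy' as [? _]; lra.
    + apply IH; split; assumption.
Qed.


Definition sumR (l : list R) : R := fold_right Rplus 0 l.

Fixpoint allseq (n A : nat) : list (list nat) :=
  match n with
  | O => nil :: nil
  | S m => flat_map (fun a => map (cons a) (allseq m A)) (seq 1 A)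
  end.

Definition wm (h : nat -> R) (l : list nat) : R := fold_right (fun a r => h a * r) 1 l.

Lemma sumR_app l1 l2 : sumR (l1 ++ l2) = sumR l1 + sumR l2.
Proof. induction l1; simpl; [ring|]. rewrite IHl1; ring. Qed.

Lemma sumR_flat_map {T} (g : list nat -> R) (F : T -> list (list nat)) L :
  sumR (map g (flat_map F L)) = sumR (map (fun a => sumR (map g (F a))) L).
Proof. induction L; simpl; [reflexivity|]. rewrite map_app, sumR_app, IHL. reflexivity. Qed.

Lemma sumR_cons_map h a X : sumR (map (wm h) (map (cons a) X)) = h a * sumR (map (wm h) X).
Proof. induction X; simpl; [ring|]. rewrite IHX. unfold wm at 1. simpl. fold (wm h a0). ring. Qed.

Lemma sumR_mulc {T} (h : T -> R) c L : sumR (map (fun a => h a * c) L) = sumR (map h L) * c.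
Proof. induction L; simpl; [ring|]. rewrite IHL. ring. Qed.

Lemma sumR_allseq h n A : sumR (map (wm h) (allseq n A)) = (sumR (map h (seq 1 A))) ^ n.
Proof.
  induction n; simpl. { unfold wm; simpl. ring. }
  rewrite sumR_flat_map.
  transitivity (sumR (map (fun a => h a * sumR (map (wm h) (allseq n A))) (seq 1 A))).
  { f_equal. apply map_ext. intro a. apply sumR_cons_map. }
  rewrite IHn. rewrite sumR_mulc. simpl. ring.
Qed.

Lemma in_allseq n A l : length l = n -> (forall a, In a l -> (1 <= a <= A)%nat) -> In l (allseq n A).
Proof.
  revert l. induction n; intros l Hl Ha.
  - destruct l; [simpl; auto|discriminate].
  - destruct l as [|a l]; [discriminate|]. simpl. apply in_flat_map. exists a. split.
    + apply in_seq. specialize (Ha a (or_introl eq_refl)). lia.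
    + apply in_map. apply IHn; [simpl in Hl; lia|]. intros b Hb. apply Ha. right; exact Hb.
Qed.

Lemma sumR_le {T} (f g : T -> R) L : (forall x, In x L -> f x <= g x) -> sumR (map f L) <= sumR (map g L).
Proof. induction L; simpl; intros H; [lra|]. apply Rplus_le_compat; auto. Qed.

Lemma sumR_nonneg (L : list R) : (forall x, In x L -> 0 <= x) -> 0 <= sumR L.
Proof. induction L; simpl; intros H; [lra|]. pose proof (H a (or_introl eq_refl)). pose proof (IHL (fun x Hx => H x (or_intror Hx))). lra. Qed.

Lemma sumR_filter {T} (f g : T -> R) (p : T -> bool) L :
  (forall x, In x L -> 0 <= g x) -> (forall x, In x L -> p x = true -> f x <= g x) ->
  sumR (map f (filter p L)) <= sumR (map g L).
Proof.
  induction L; simpl; intros H1 H2; [lra|].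
  destruct (p a) eqn:E; simpl.
  - apply Rplus_le_compat; auto.
  - pose proof (H1 a (or_introl eq_refl)).
    assert (sumR (map f (filter p L)) <= sumR (map g L)) by auto. lra.
Qed.

Lemma ln_lower y : 0 < y -> 1 - / y <= ln y.
Proof.
  intro Hy. pose proof (exp_ineq1_le (ln (/ y))). rewrite exp_ln in H by (apply Rinv_0_lt_compat; lra).
  rewrite ln_Rinv in H by lra. lra.
Qed.

Definition pw (u : R) (a : nat) : R := exp (- (1 + u) * ln (INR a)).

Lemma pw_tele u (a : nat) : 0 < u -> (2 <= a)%nat ->
  pw u a <= / u * (exp (- u * ln (INR (a - 1))) - exp (- u * ln (INR a))).
Proof.
  intros Hu Ha. assert (HA : 2 <= INR a) by (apply (le_INR 2); exact Ha).
  rewrite minus_INR by lia. simpl INR.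
  set (A := INR a) in *.
  assert (Hd : / A <= ln A - ln (A - 1)).
  { assert (ln A - ln (A - 1) = ln (A / (A - 1))) as ->.
    { unfold Rdiv. rewrite ln_mult, ln_Rinv by (try apply Rinv_0_lt_compat; lra). ring. }
    pose proof (ln_lower (A / (A - 1))).
    replace (/ (A / (A - 1))) with ((A - 1) / A) in H by (field; lra).
    assert (1 - (A - 1) / A = / A) by (field; lra).
    assert (0 < A / (A - 1)) by (apply Rdiv_lt_0_compat; lra). lra. }
  assert (E1 : exp (- u * ln (A - 1)) = exp (- u * ln A) * exp (u * (ln A - ln (A - 1)))).
  { rewrite <- exp_plus. f_equal. ring. }
  pose proof (exp_ineq1_le (u * (ln A - ln (A - 1)))).
  assert (E2 : pw u a = exp (- u * ln A) * exp (- ln A)).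
  { unfold pw. fold A. rewrite <- exp_plus. f_equal. ring. }
  rewrite exp_Ropp, exp_ln in E2 by lra.
  rewrite E2, E1. pose proof (exp_pos (- u * ln A)).
  apply (Rmult_le_reg_l u); [exact Hu|].
  replace (u * (/ u * (exp (- u * ln A) * exp (u * (ln A - ln (A - 1))) - exp (- u * ln A))))
    with (exp (- u * ln A) * (exp (u * (ln A - ln (A - 1))) - 1)) by (field; lra).
  rewrite <- Rmult_assoc, (Rmult_comm u), Rmult_assoc.
  apply Rmult_le_compat_l; [lra|]. nra.
Qed.

Lemma seq_S_end s n : seq s (S n) = seq s n ++ (s + n)%nat :: nil.
Proof. apply seq_S. Qed.

Lemma pw_sum u A : 0 < u -> (1 <= A)%nat ->
  sumR (map (pw u) (seq 1 A)) <= 1 + / u * (1 - exp (- u * ln (INR A))).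
Proof.
  intros Hu HA. induction A as [|A IH]; [lia|].
  destruct A.
  - simpl. unfold pw. simpl. rewrite ln_1. rewrite !Rmult_0_r, exp_0. lra.
  - rewrite seq_S_end, map_app, sumR_app. simpl (sumR (map (pw u) ((1 + S A)%nat :: nil))).
    specialize (IH ltac:(lia)).
    pose proof (pw_tele u (1 + S A) Hu ltac:(lia)).
    replace (1 + S A - 1)%nat with (S A) in H by lia.
    replace (1 + S A)%nat with (S (S A)) in * by lia.
    assert (0 < / u) by (apply Rinv_0_lt_compat; lra).
    nra.
Qed.

Lemma pw_sum_bound u A : 0 < u -> sumR (map (pw u) (seq 1 A)) <= 1 + / u.
Proof.
  intros Hu. destruct A.
  - simpl. assert (0 < / u) by (apply Rinv_0_lt_compat; lra). lra.
  - pose proof (pw_sum u (S A) Hu ltac:(lia)). pose proof (exp_pos (- u * ln (INR (S A)))).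
    assert (0 < / u) by (apply Rinv_0_lt_compat; lra). nra.
Qed.


Lemma Tmax_ge n x k : (1 <= k <= n)%nat -> (pq k x <= Tmax n x)%nat.
Proof.
  induction n; intros Hk; [lia|]. simpl.
  destruct (Nat.eq_dec k (S n)) as [->|Hne]; [lia|].
  specialize (IHn ltac:(lia)). lia.
Qed.

Lemma Tmax_ge1 n x : good x -> (1 <= n)%nat -> 1 <= INR (Tmax n x).
Proof.
  intros G Hn. pose proof (pq_ge1 n x G Hn). pose proof (Tmax_ge n x n ltac:(lia)).
  apply le_INR in H0. lra.
Qed.

Lemma dl_S_end n x : dl (S n) x = dl n x ++ pq (S n) x :: nil.
Proof. unfold dl. rewrite seq_S, map_app. reflexivity. Qed.

Lemma prodR_app l1 l2 : prodR (l1 ++ l2) = prodR l1 * prodR l2.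
Proof. induction l1; simpl; [ring|]. rewrite IHl1. ring. Qed.

Lemma prodR_dl_pos n x : good x -> 1 <= prodR (dl n x).
Proof. intro G. apply prodR_ge1. apply dl_ge1. exact G. Qed.

Lemma growth lam e0 N x :
  0 < lam -> 0 < e0 < 1 -> 1 + e0 <= exp (lam / 2) * (1 - e0) -> good x -> (1 <= N)%nat ->
  (forall n, (N <= n)%nat -> exp (sqrt (INR (S n))) <= exp (lam / 2) * exp (sqrt (INR n))) ->
  (forall n, (N <= n)%nat -> (1 - e0) * exp (sqrt (INR n)) <= INR (Tmax n x) <= (1 + e0) * exp (sqrt (INR n))) ->
  forall n, (N <= n)%nat ->
  ((ln (INR (Tmax n x))) ^ 2 - (ln (INR (Tmax N x))) ^ 2) / (2 * lam) <= ln (prodR (dl n x)).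
Proof.
  intros Hl He Hr G HN Hsq HT n Hn. induction Hn as [|n Hn IH].
  - pose proof (prodR_dl_pos N x G). replace (_ / _) with 0 by (field; lra).
    rewrite <- ln_1. destruct (Req_dec (prodR (dl N x)) 1) as [E|E]; [rewrite E; lra|].
    left. apply ln_increasing; lra.
  - rewrite dl_S_end, prodR_app. simpl prodR. rewrite Rmult_1_r.
    pose proof (prodR_dl_pos n x G) as HP.
    set (a := pq (S n) x). pose proof (pq_ge1 (S n) x G ltac:(lia)) as Ha. fold a in Ha.
    rewrite ln_mult by lra.
    pose proof (Tmax_ge1 n x G ltac:(lia)) as HTn.
    assert (Hlnn : 0 <= ln (INR (Tmax n x))).
    { rewrite <- ln_1. destruct (Req_dec (INR (Tmax n x)) 1) as [E|E]; [rewrite E; lra|]. left; apply ln_increasing; lra. }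
    assert (Hlna : 0 <= ln (INR a)).
    { rewrite <- ln_1. destruct (Req_dec (INR a) 1) as [E|E]; [rewrite E; lra|]. left; apply ln_increasing; lra. }
    simpl Tmax. fold a.
    destruct (Nat.le_gt_cases a (Tmax n x)) as [Hle|Hgt].
    + rewrite Nat.max_l by exact Hle. lra.
    + rewrite Nat.max_r by lia.
      assert (HaT : ln (INR a) <= ln (INR (Tmax n x)) + lam).
      { assert (INR a <= exp lam * INR (Tmax n x)).
        { destruct (HT (S n) ltac:(lia)) as [_ H1]. simpl Tmax in H1. fold a in H1.
          rewrite Nat.max_r in H1 by lia. destruct (HT n Hn) as [H2 _].
          specialize (Hsq n Hn).
          replace lam with (lam / 2 + lam / 2) by field. rewrite exp_plus.
          pose proof (exp_pos (sqrt (INR (S n)))). pose proof (exp_pos (lam/2)).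
          pose proof (exp_pos (sqrt (INR n))).
          apply Rle_trans with ((1 + e0) * exp (sqrt (INR (S n)))); [exact H1|].
          apply Rle_trans with (exp (lam / 2) * (1 - e0) * (exp (lam / 2) * exp (sqrt (INR n)))).
          { apply Rmult_le_compat; lra. }
          replace (exp (lam / 2) * (1 - e0) * (exp (lam / 2) * exp (sqrt (INR n))))
            with ((exp (lam / 2) * exp (lam / 2)) * ((1 - e0) * exp (sqrt (INR n)))) by ring.
          apply Rmult_le_compat_l. { apply Rmult_le_pos; left; apply exp_pos. } exact H2. }
        rewrite <- (ln_exp lam), <- ln_mult by (try apply exp_pos; lra).
        rewrite (Rmult_comm (INR (Tmax n x))) in *.
        destruct (Req_dec (INR a) (exp lam * INR (Tmax n x))) as [E|E]; [rewrite E; lra|].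
        left; apply ln_increasing; [lra|]. lra. }
      assert (HTa : ln (INR (Tmax n x)) <= ln (INR a)).
      { apply lt_INR in Hgt. left; apply ln_increasing; lra. }
      set (y := ln (INR (Tmax n x))) in *. set (y' := ln (INR a)) in *.
      set (y0 := ln (INR (Tmax N x))) in *.
      assert ((y' ^ 2 - y ^ 2) <= 2 * lam * y') by nra.
      apply Rle_trans with ((y ^ 2 - y0 ^ 2) / (2 * lam) + y'); [|lra].
      apply (Rmult_le_reg_l (2 * lam)); [lra|].
      replace (2 * lam * ((y' ^ 2 - y0 ^ 2) / (2 * lam))) with (y' ^ 2 - y0 ^ 2) by (field; lra).
      replace (2 * lam * ((y ^ 2 - y0 ^ 2) / (2 * lam) + y')) with (y ^ 2 - y0 ^ 2 + 2 * lam * y') by (field; lra).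
      lra.
Qed.


Lemma exp_le x y : x <= y -> exp x <= exp y.
Proof. intros [H|H]; [left; apply exp_increasing; exact H|rewrite H; lra]. Qed.

Lemma ln_le x y : 0 < x -> x <= y -> ln x <= ln y.
Proof. intros Hx [H|H]; [left; apply ln_increasing; lra|rewrite H; lra]. Qed.

Lemma ln_le_x1 y : 0 < y -> ln y <= y - 1.
Proof. intro Hy. pose proof (exp_ineq1_le (ln y)). rewrite exp_ln in H by lra. lra. Qed.

Lemma wm_pw u l : (forall a, In a l -> (1 <= a)%nat) ->
  wm (pw u) l = exp (- (1 + u) * ln (prodR l)).
Proof.
  induction l as [|a l IH]; intros H.
  - unfold wm; simpl. rewrite ln_1, Rmult_0_r, exp_0. reflexivity.
  - unfold wm; simpl. fold (wm (pw u) l). rewrite IH by (intros; apply H; right; assumption).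
    assert (1 <= INR a) by (apply (le_INR 1); apply H; left; reflexivity).
    assert (1 <= prodR l) by (apply prodR_ge1; intros; apply H; right; assumption).
    rewrite ln_mult by lra. unfold pw. rewrite <- exp_plus. f_equal. ring.
Qed.

Lemma allseq_in n A l : In l (allseq n A) -> length l = n /\ forall a, In a l -> (1 <= a <= A)%nat.
Proof.
  revert l. induction n; intros l H.
  - simpl in H. destruct H as [<-|[]]. split; [reflexivity|intros a []].
  - simpl in H. apply in_flat_map in H. destruct H as [a [Ha Hl]]. apply in_map_iff in Hl.
    destruct Hl as [l' [<- Hl']]. apply IHn in Hl'. destruct Hl' as [Hlen Hb].
    apply in_seq in Ha. split; [simpl; lia|]. intros b [<-|Hb']; [lia|auto].
Qed.

Lemma pick_n (N : nat) (X : R) : exists n, (N <= n)%nat /\ X <= sqrt (INR n).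
Proof.
  destruct (INR_archimed 1 (X * X) ltac:(lra)) as [m Hm].
  exists (m + N)%nat. split; [lia|]. rewrite plus_INR.
  pose proof (pos_INR N).
  apply Rle_trans with (Rabs X); [apply Rle_abs|].
  rewrite <- sqrt_Rsqr_abs. apply sqrt_le_1_alt. unfold Rsqr. lra.
Qed.

Lemma wm_pos (h : nat -> R) l : (forall a, 0 < h a) -> 0 < wm h l.
Proof. intro H. induction l; unfold wm; simpl; [lra|]. fold (wm h l). apply Rmult_lt_0_compat; auto. Qed.

Lemma sumR_mulc_l {T} (g : T -> R) c L : sumR (map (fun a => c * g a) L) = c * sumR (map g L).
Proof. induction L; simpl; [ring|]. rewrite IHL. ring. Qed.

Definition Gset (e0 : R) (N : nat) (x : R) : Prop :=
  good x /\ forall n, (N <= n)%nat ->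
    (1 - e0) * exp (sqrt (INR n)) <= INR (Tmax n x) <= (1 + e0) * exp (sqrt (INR n)).

Definition cover_list (s delta eta : R) (E : R -> Prop) : Prop :=
  exists L : list ((R -> Prop) * R),
    (forall p, In p L -> 0 < snd p <= delta /\ diam_le (fst p) (snd p)) /\
    (forall x, E x -> exists p, In p L /\ fst p x) /\
    sumR (map (fun p => Rpower (snd p) s) L) <= eta.

Lemma core s lam e0 N delta eta :
  1/2 < s -> lam = (s - 1/2) / (4 * ln (1 + / (s - 1/2))) ->
  0 < e0 < 1 -> 1 + e0 <= exp (lam / 2) * (1 - e0) -> (1 <= N)%nat ->
  (forall n, (N <= n)%nat -> exp (sqrt (INR (S n))) <= exp (lam / 2) * exp (sqrt (INR n))) ->
  0 < delta -> 0 < eta ->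
  cover_list s delta eta (Gset e0 N).
Proof.
  intros Hs Hlam He Hr HN Hsq Hd Heta.
  set (u := s - 1/2) in *.
  assert (Hu : 0 < u) by (unfold u; lra).
  set (lZ := ln (1 + / u)) in *.
  assert (HlZ : 0 < lZ).
  { unfold lZ. rewrite <- ln_1. apply ln_increasing; [lra|]. pose proof (Rinv_0_lt_compat u Hu). lra. }
  assert (Hl : 0 < lam) by (rewrite Hlam; apply Rdiv_lt_0_compat; lra).
  set (D := (1 + sqrt (INR N)) ^ 2 / (2 * lam)).
  set (c := - ln (1 - e0)).
  assert (Hc : 0 <= c).
  { unfold c. assert (ln (1 - e0) <= 0); [|lra]. rewrite <- ln_1. apply ln_le; lra. }
  set (X := 4 * c + 1 + Rabs ((u * D - ln eta) / lZ) + Rabs (2 * lam * (D - ln delta / 2))).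
  destruct (pick_n N X) as [n [Hn HX]].
  set (y := sqrt (INR n)) in *. unfold X in HX.
  assert (Hy2 : y * y = INR n) by (apply sqrt_sqrt, pos_INR).
  assert (Hy0 : 0 <= y) by apply sqrt_pos.
  pose proof (Rle_abs ((u * D - ln eta) / lZ)) as HX1.
  pose proof (Rle_abs (2 * lam * (D - ln delta / 2))) as HX2.
  pose proof (Rabs_pos ((u * D - ln eta) / lZ)) as HX3.
  pose proof (Rabs_pos (2 * lam * (D - ln delta / 2))) as HX4.
  set (beta := (INR n - 2 * c * y) / (2 * lam) - D).
  assert (Hgrow : forall x, Gset e0 N x -> beta <= ln (prodR (dl n x))).
  { intros x [G HT].
    pose proof (growth lam e0 N x Hl He Hr G HN Hsq HT n Hn) as Hg.
    destruct (HT N (le_n N)) as [_ HTN].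
    pose proof (Tmax_ge1 N x G HN) as HTN1.
    assert (HlN0 : 0 <= ln (INR (Tmax N x))) by (rewrite <- ln_1; apply ln_le; lra).
    assert (HlN1 : ln (INR (Tmax N x)) <= 1 + sqrt (INR N)).
    { apply Rle_trans with (ln ((1 + e0) * exp (sqrt (INR N)))); [apply ln_le; lra|].
      rewrite ln_mult by (try apply exp_pos; lra). rewrite ln_exp.
      pose proof (ln_le_x1 (1 + e0) ltac:(lra)). lra. }
    destruct (HT n Hn) as [HTn _].
    assert (Hln : y - c <= ln (INR (Tmax n x))).
    { apply Rle_trans with (ln ((1 - e0) * exp y)).
      - rewrite ln_mult by (try apply exp_pos; lra). rewrite ln_exp. unfold c. lra.
      - apply ln_le; [apply Rmult_lt_0_compat; [lra|apply exp_pos]|exact HTn]. }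
    assert (Hyc : c <= y) by lra.
    set (Ln := ln (INR (Tmax n x))) in *. set (LN := ln (INR (Tmax N x))) in *.
    apply Rle_trans with ((Ln ^ 2 - LN ^ 2) / (2 * lam)); [|exact Hg].
    unfold beta, D.
    replace ((INR n - 2 * c * y) / (2 * lam) - (1 + sqrt (INR N)) ^ 2 / (2 * lam))
      with ((INR n - 2 * c * y - (1 + sqrt (INR N)) ^ 2) / (2 * lam)) by (field; lra).
    unfold Rdiv. apply Rmult_le_compat_r; [left; apply Rinv_0_lt_compat; lra|].
    rewrite <- Hy2. assert (0 <= y - c) by lra.
    assert ((y - c) * (y - c) <= Ln * Ln) by (apply Rmult_le_compat; lra).
    assert (LN * LN <= (1 + sqrt (INR N)) * (1 + sqrt (INR N))) by (apply Rmult_le_compat; lra).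
    simpl. nra. }
  set (B := exp beta).
  assert (HB : 0 < B) by apply exp_pos.
  destruct (INR_archimed 1 ((1 + e0) * exp y) ltac:(lra)) as [A HA]. rewrite Rmult_1_r in HA.
  set (pb := fun l : list nat => if Rle_dec B (prodR l) then true else false).
  exists (map (fun l => (cyl l, / prodR l ^ 2)) (filter pb (allseq n A))).
  assert (Hbeta : - ln delta / 2 <= beta).
  { unfold beta. rewrite <- Hy2.
    replace ((y * y - 2 * c * y) / (2 * lam) - D) with (y * (y - 2 * c) / (2 * lam) - D) by (field; lra).
    assert (y / (2 * lam) <= y * (y - 2 * c) / (2 * lam)).
    { unfold Rdiv. apply Rmult_le_compat_r; [left; apply Rinv_0_lt_compat; lra|]. nra. }
    assert (2 * lam * (D - ln delta / 2) <= y) by lra.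
    assert (D - ln delta / 2 <= y / (2 * lam)).
    { apply (Rmult_le_reg_l (2 * lam)); [lra|]. replace (2 * lam * (y / (2 * lam))) with y by (field; lra). lra. }
    lra. }
  split; [|split].
  - intros p Hp. apply in_map_iff in Hp. destruct Hp as [l [<- Hl']].
    apply filter_In in Hl'. destruct Hl' as [Hl1 Hl2]. unfold pb in Hl2.
    destruct (Rle_dec B (prodR l)) as [HPB|]; [|discriminate]. cbn [fst snd].
    split; [split|].
    + apply Rinv_0_lt_compat. apply pow_lt. lra.
    + apply Rle_trans with (/ B ^ 2).
      * apply Rinv_le_contravar; [apply pow_lt; lra|]. apply pow_incr. lra.
      * unfold B. replace (/ exp beta ^ 2) with (exp (- (2 * beta))).
        2:{ rewrite exp_Ropp. f_equal. replace (2 * beta) with (beta + beta) by ring. rewrite exp_plus. ring. }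
        apply Rle_trans with (exp (ln delta)); [apply exp_le; lra|rewrite exp_ln by lra; lra].
    + intros x1 y1 H1 H2. apply cyl_diam; assumption.
  - intros x Hx. exists (cyl (dl n x), / prodR (dl n x) ^ 2). split.
    + apply (in_map (fun l => (cyl l, / prodR l ^ 2))). apply filter_In. split.
      * apply in_allseq; [apply dl_length|]. intros a Ha. split; [apply (dl_ge1 n x (proj1 Hx)); exact Ha|].
        unfold dl in Ha. apply in_map_iff in Ha. destruct Ha as [k [<- Hk]]. apply in_seq in Hk.
        pose proof (Tmax_ge n x k ltac:(lia)). apply INR_le.
        destruct Hx as [_ HT]. destruct (HT n Hn) as [_ H2]. fold y in H2. apply le_INR in H. lra.
      * unfold pb. destruct (Rle_dec B (prodR (dl n x))) as [|Hno]; [reflexivity|exfalso; apply Hno].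
        unfold B. pose proof (prodR_dl_pos n x (proj1 Hx)). rewrite <- (exp_ln (prodR (dl n x))) by lra.
        apply exp_le. apply Hgrow. exact Hx.
    + simpl. split; [exact (proj1 Hx)|]. rewrite dl_length. reflexivity.
  - rewrite map_map. cbn [fst snd].
    apply Rle_trans with (sumR (map (fun l => exp (- u * beta) * wm (pw u) l) (allseq n A))).
    + apply sumR_filter.
      * intros l _. apply Rmult_le_pos; [left; apply exp_pos|].
        left. apply wm_pos. intro a. apply exp_pos.
      * intros l Hll Hpl. unfold pb in Hpl. destruct (Rle_dec B (prodR l)) as [HPB|]; [|discriminate].
        apply allseq_in in Hll. destruct Hll as [_ Hll].
        assert (HP1 : 1 <= prodR l) by (apply prodR_ge1; intros a Ha; apply Hll; exact Ha).
        rewrite wm_pw by (intros a Ha; apply Hll; exact Ha).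
        unfold Rpower. rewrite ln_Rinv by (apply pow_lt; lra). rewrite ln_pow by lra.
        assert (Hlb : beta <= ln (prodR l)).
        { unfold B in HPB. rewrite <- (ln_exp beta). apply ln_le; [apply exp_pos|exact HPB]. }
        replace (s * - (INR 2 * ln (prodR l))) with (- u * ln (prodR l) + - (1 + u) * ln (prodR l))
          by (unfold u; change (INR 2) with 2; field).
        rewrite exp_plus. apply Rmult_le_compat_r; [left; apply exp_pos|]. apply exp_le. nra.
    + rewrite sumR_mulc_l. rewrite sumR_allseq.
      apply Rle_trans with (exp (- u * beta) * (1 + / u) ^ n).
      { apply Rmult_le_compat_l; [left; apply exp_pos|]. apply pow_incr. split.
        - apply sumR_nonneg. intros r Hr0. apply in_map_iff in Hr0. destruct Hr0 as [a [<- _]]. left; apply exp_pos.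
        - apply pw_sum_bound; exact Hu. }
      assert (HZ : (1 + / u) ^ n = exp (INR n * lZ)).
      { unfold lZ. rewrite <- ln_pow by (pose proof (Rinv_0_lt_compat u Hu); lra).
        rewrite exp_ln; [reflexivity|]. apply pow_lt. pose proof (Rinv_0_lt_compat u Hu); lra. }
      rewrite HZ, <- exp_plus. rewrite <- (exp_ln eta) by lra. apply exp_le.
      assert (Hlam2 : u / (2 * lam) = 2 * lZ).
      { rewrite Hlam. fold u. fold lZ. field. split; lra. }
      assert (E1 : - u * beta + INR n * lZ = lZ * y * (4 * c - y) + u * D).
      { unfold beta. rewrite <- Hy2.
        replace (- u * ((y * y - 2 * c * y) / (2 * lam) - D)) with (- (u / (2 * lam)) * (y * y - 2 * c * y) + u * D)
          by (field; lra).
        rewrite Hlam2. ring. }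
      rewrite E1.
      assert (Hy' : (u * D - ln eta) / lZ <= y) by lra.
      assert (u * D - ln eta <= lZ * y).
      { apply (Rmult_le_reg_r (/ lZ)); [apply Rinv_0_lt_compat; lra|].
        replace (lZ * y * / lZ) with y by (field; lra). exact Hy'. }
      assert (lZ * y * (4 * c - y) <= - (lZ * y)).
      { assert (4 * c - y <= -1) by lra. assert (0 <= lZ * y) by nra. nra. }
      lra.
Qed.


Definition elt := ((R -> Prop) * R)%type.
Definition dflt : elt := (fun _ => False, 1).

Lemma dummy_rad s delta eta : 0 < s -> 0 < delta -> 0 < eta ->
  exists rho, 0 < rho <= delta /\ Rpower rho s <= eta.
Proof.
  intros Hs Hd He. exists (Rmin delta (exp (ln eta / s))). split; [split|].
  - apply Rmin_glb_lt; [lra|apply exp_pos].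
  - apply Rmin_l.
  - unfold Rpower. assert (H0 : 0 < Rmin delta (exp (ln eta / s))) by (apply Rmin_glb_lt; [lra|apply exp_pos]).
    rewrite <- (exp_ln eta) at 2 by lra. apply exp_le.
    assert (ln (Rmin delta (exp (ln eta / s))) <= ln eta / s).
    { rewrite <- (ln_exp (ln eta / s)) at 2. apply ln_le; [exact H0|apply Rmin_r]. }
    replace (ln eta) with (s * (ln eta / s)) at 2 by (field; lra).
    apply Rmult_le_compat_l; lra.
Qed.

Fixpoint flat (Lp : nat -> list elt) (k : nat) : list elt := match k with O => nil | S k => flat Lp k ++ Lp k end.

Lemma flat_prefix Lp k1 k2 : (k1 <= k2)%nat -> exists rest, flat Lp k2 = flat Lp k1 ++ rest.
Proof.
  intros H. induction H.
  - exists nil. rewrite app_nil_r. reflexivity.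
  - destruct IHle as [rest E]. exists (rest ++ Lp m). simpl. rewrite E, app_assoc. reflexivity.
Qed.

Lemma flat_len Lp (Hne : forall N, Lp N <> nil) k : (k <= length (flat Lp k))%nat.
Proof.
  induction k; simpl; [lia|]. rewrite length_app. specialize (Hne k). destruct (Lp k); [congruence|]. simpl. lia.
Qed.

Lemma flat_in Lp k p : In p (flat Lp k) -> exists N, In p (Lp N).
Proof. induction k; simpl; [intros []|]. intros H. apply in_app_or in H. destruct H; eauto. Qed.

Lemma sum_nth (w : elt -> R) (Hw : forall p, 0 <= w p) F m :
  (m < length F)%nat -> sum_f_R0 (fun i => w (nth i F dflt)) m <= sumR (map w F).
Proof.
  revert m. induction F as [|a F IH]; intros m Hm; simpl in Hm; [lia|].
  destruct m.
  - simpl. pose proof (sumR_nonneg (map w F)). assert (0 <= sumR (map w F)).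
    { apply sumR_nonneg. intros x Hx. apply in_map_iff in Hx. destruct Hx as [p [<- _]]. apply Hw. }
    simpl. lra.
  - rewrite decomp_sum by lia. simpl. simpl in IH. apply Rplus_le_compat_l. apply IH. lia.
Qed.

Lemma union_null s delta (E0 : R -> Prop) (G : nat -> R -> Prop) :
  0 < s -> 0 < delta ->
  (forall x, E0 x -> exists N, G N x) ->
  (forall N eta, 0 < eta -> cover_list s delta eta (G N)) ->
  Hdelta_null s delta E0.
Proof.
  intros Hs Hd HE HG eps Heps.
  set (eta := fun N : nat => eps / 8 * (/ 2) ^ N).
  assert (Heta : forall N, 0 < eta N).
  { intro N. unfold eta. apply Rmult_lt_0_compat; [lra|]. apply pow_lt. lra. }
  assert (Hex : forall N, exists L : list elt,
    (forall p, In p L -> 0 < snd p <= delta /\ diam_le (fst p) (snd p)) /\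
    (forall x, G N x -> exists p, In p L /\ fst p x) /\
    L <> nil /\ sumR (map (fun p => Rpower (snd p) s) L) <= 2 * eta N).
  { intro N. destruct (HG N (eta N) (Heta N)) as [L [H1 [H2 H3]]].
    destruct (dummy_rad s delta (eta N) Hs Hd (Heta N)) as [rho [Hr1 Hr2]].
    exists ((fun _ => False, rho) :: L). split; [|split; [|split]].
    - intros p [<-|Hp]; [|auto]. simpl. split; [lra|]. intros x y [].
    - intros x Hx. destruct (H2 x Hx) as [p [Hp Hpx]]. exists p. split; [right|]; assumption.
    - discriminate.
    - simpl. lra. }
  set (Lp := fun N => proj1_sig (constructive_indefinite_description _ (Hex N))).
  assert (HLp : forall N, let L := Lp N in
    (forall p, In p L -> 0 < snd p <= delta /\ diam_le (fst p) (snd p)) /\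
    (forall x, G N x -> exists p, In p L /\ fst p x) /\
    L <> nil /\ sumR (map (fun p => Rpower (snd p) s) L) <= 2 * eta N).
  { intro N. unfold Lp. apply proj2_sig. }
  assert (Hne : forall N, Lp N <> nil) by (intro N; apply (HLp N)).
  set (w := fun p : elt => Rpower (snd p) s).
  assert (Hw : forall p, 0 <= w p) by (intro p; unfold w, Rpower; left; apply exp_pos).
  set (U := fun i => fst (nth i (flat Lp (S i)) dflt)).
  set (r := fun i => snd (nth i (flat Lp (S i)) dflt)).
  assert (Hflat_sum : forall k, sumR (map w (flat Lp k)) <= eps / 2 * (1 - (/ 2) ^ k)).
  { induction k; simpl; [lra|]. rewrite map_app, sumR_app.
    destruct (HLp k) as [_ [_ [_ H]]]. fold w in H. unfold eta in H.
    set (P := (/ 2) ^ k) in *.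
    assert (eps / 2 * (1 - / 2 * P) = eps / 2 * (1 - P) + 2 * (eps / 8 * P)) by field.
    assert (H' : sumR (map w (Lp k)) <= 2 * (eps / 8 * P)) by exact H. lra. }
  assert (Hpart : forall n, sum_f_R0 (fun i => Rpower (r i) s) n <= eps / 2).
  { intro n.
    assert (E : forall i, (i <= n)%nat -> Rpower (r i) s = w (nth i (flat Lp (S n)) dflt)).
    { intros i Hi. unfold r, w. destruct (flat_prefix Lp (S i) (S n) ltac:(lia)) as [rest Er].
      rewrite Er. rewrite app_nth1; [reflexivity|]. pose proof (flat_len Lp Hne (S i)). lia. }
    rewrite (sum_eq _ (fun i => w (nth i (flat Lp (S n)) dflt))) by exact E.
    apply Rle_trans with (sumR (map w (flat Lp (S n)))).
    - apply sum_nth; [exact Hw|]. pose proof (flat_len Lp Hne (S n)). lia.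
    - pose proof (Hflat_sum (S n)). pose proof (pow_lt (/ 2) (S n) ltac:(lra)). assert (0 <= eps / 2 * (/ 2) ^ S n) by (apply Rmult_le_pos; lra). lra. }
  assert (Hgrow : Un_growing (fun n => sum_f_R0 (fun i => Rpower (r i) s) n)).
  { intro n. simpl. unfold Rpower. pose proof (exp_pos (s * ln (r (S n)))). lra. }
  assert (Hub : has_ub (fun n => sum_f_R0 (fun i => Rpower (r i) s) n)).
  { exists (eps / 2). intros y [n ->]. apply Hpart. }
  destruct (growing_cv _ Hgrow Hub) as [l Hl].
  exists U, r, l. split; [|split; [|split]].
  - intro i. assert (Hi : (i < length (flat Lp (S i)))%nat) by (pose proof (flat_len Lp Hne (S i)); lia).
    pose proof (nth_In _ dflt Hi) as Hin. apply flat_in in Hin. destruct Hin as [N HN].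
    destruct (HLp N) as [H1 _]. destruct (H1 _ HN) as [[Ha Hb] Hc]. unfold U, r. auto.
  - intros x Hx. destruct (HE x Hx) as [N HN]. destruct (HLp N) as [_ [H2 _]].
    destruct (H2 x HN) as [p [Hp Hpx]]. destruct (In_nth _ _ dflt Hp) as [j [Hj Ej]].
    set (i := (length (flat Lp N) + j)%nat).
    exists i. unfold U.
    assert (HiN : (N <= i)%nat) by (pose proof (flat_len Lp Hne N); unfold i; lia).
    destruct (flat_prefix Lp (S N) (S i) ltac:(lia)) as [rest Er]. rewrite Er.
    rewrite app_nth1.
    + simpl. rewrite app_nth2 by (unfold i; lia). replace (i - length (flat Lp N))%nat with j by (unfold i; lia).
      rewrite Ej. exact Hpx.
    + simpl. rewrite length_app. unfold i. lia.
  - exact Hl.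
  - assert (l <= eps / 2).
    { apply Rnot_lt_le. intro Hlt. destruct (Hl (l - eps / 2) ltac:(lra)) as [n Hn].
      specialize (Hn n (le_n n)). unfold Rdist in Hn. specialize (Hpart n).
      apply Rabs_def2 in Hn. lra. }
    lra.
Qed.


Lemma null_half s : 1/2 < s -> Hausdorff_null s F_half_one.
Proof.
  intros Hs.
  set (u := s - 1/2).
  assert (Hu : 0 < u) by (unfold u; lra).
  set (lam := u / (4 * ln (1 + / u))).
  assert (HlZ : 0 < ln (1 + / u)).
  { rewrite <- ln_1. apply ln_increasing; [lra|]. pose proof (Rinv_0_lt_compat u Hu). lra. }
  assert (Hl : 0 < lam) by (unfold lam; apply Rdiv_lt_0_compat; lra).
  set (rho := exp (lam / 2)).
  assert (Hrho : 1 < rho) by (unfold rho; rewrite <- exp_0; apply exp_increasing; lra).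
  set (e0 := (rho - 1) / (rho + 1)).
  assert (He : 0 < e0 < 1).
  { unfold e0. split; [apply Rdiv_lt_0_compat; lra|].
    apply (Rmult_lt_reg_r (rho + 1)); [lra|]. unfold Rdiv. rewrite Rmult_assoc, Rinv_l by lra. lra. }
  assert (Hr : 1 + e0 <= exp (lam / 2) * (1 - e0)).
  { fold rho. unfold e0. right. field. lra. }
  destruct (pick_n 0 (/ lam)) as [N1 [_ HN1]].
  assert (Hsq : forall n, (N1 <= n)%nat -> exp (sqrt (INR (S n))) <= exp (lam / 2) * exp (sqrt (INR n))).
  { intros n Hn. rewrite <- exp_plus. apply exp_le.
    assert (Hsn : / lam <= sqrt (INR n)).
    { apply Rle_trans with (sqrt (INR N1)); [exact HN1|]. apply sqrt_le_1_alt. apply le_INR. exact Hn. }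
    assert (H1 : 1 <= lam * sqrt (INR n)).
    { apply (Rmult_le_compat_l lam) in Hsn; [|lra]. rewrite Rinv_r in Hsn by lra. exact Hsn. }
    pose proof (sqrt_pos (INR n)).
    assert (Hsq2 : sqrt (INR n) * sqrt (INR n) = INR n) by (apply sqrt_sqrt, pos_INR).
    rewrite <- (sqrt_Rsqr (lam / 2 + sqrt (INR n))) by lra.
    apply sqrt_le_1_alt. rewrite S_INR. unfold Rsqr. nra. }
  intros delta Hd.
  apply (union_null s delta F_half_one (fun N => Gset e0 (N + N1 + 1))); [lra|exact Hd| |].
  - intros x [Hx [Hirr Hcv]]. destruct (Hcv e0 (proj1 He)) as [M HM].
    exists M. split; [split; assumption|]. intros n Hn.
    specialize (HM n ltac:(lia)). unfold Rdist in HM. apply Rabs_def2 in HM.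
    pose proof (exp_pos (sqrt (INR n))) as HE.
    set (E := exp (sqrt (INR n))) in *. set (T := INR (Tmax n x)) in *.
    assert (ET : T = T / E * E) by (field; lra).
    split.
    + rewrite ET. apply Rmult_le_compat_r; lra.
    + rewrite ET. apply Rmult_le_compat_r; lra.
  - intros N eta Heta. apply (core s lam e0 (N + N1 + 1) delta eta); auto; try lia.
    intros n Hn. apply Hsq. lia.
Qed.

Theorem theorem2 :
  exists d, is_hausdorff_dim F_half_one d /\ d <= 1 / 2.
Proof.
  set (P := fun s => 0 <= s /\ Hausdorff_null s F_half_one).
  set (Em := fun y => P (- y)).
  assert (Hb : bound Em).
  { exists 0. intros y [Hy _]. lra. }
  assert (Hne : exists y, Em y).
  { exists (Ropp 1). unfold Em, P. rewrite Ropp_involutive. split; [lra|]. apply null_half. lra. }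
  destruct (completeness Em Hb Hne) as [m [Hm1 Hm2]].
  exists (- m). split.
  - split.
    + intros y Hy. assert (Em (- y)) by (unfold Em; rewrite Ropp_involutive; exact Hy).
      specialize (Hm1 _ H). lra.
    + intros b Hb'. assert (m <= - b).
      { apply Hm2. intros y Hy. specialize (Hb' _ Hy). lra. }
      lra.
  - apply Rnot_lt_le. intro Hlt.
    set (s := (1/2 + Rmin (- m) 1) / 2).
    assert (Hmin1 : Rmin (- m) 1 <= - m) by apply Rmin_l.
    assert (Hmin2 : Rmin (- m) 1 <= 1) by apply Rmin_r.
    assert (Hmin3 : 1/2 < Rmin (- m) 1) by (apply Rmin_glb_lt; lra).
    assert (Hs : P s) by (split; [unfold s; lra|apply null_half; unfold s; lra]).
    assert (Em (- s)) by (unfold Em; rewrite Ropp_involutive; exact Hs).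
    specialize (Hm1 _ H). unfold s in Hm1. lra.
Qed.
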